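(* Let $k \ge 2$ be a prime number. For integers $i \ge 1$ let $m_i = k^{i-1}(k-1)$ and define $0/1$ vectors $v_i$ of length $m_i$ recursively: $v_1$ is the all-zero vector of length $k-1$, and $v_{i+1}$ is the concatenation of $k-1$ copies of the block $(v_i, 1, \dots, 1)$, where the block consists of $v_i$ followed by $k^{i-1}$ ones. Index the entries of $v_i$ by $0,1,\dots,m_i-1$, let $S$ be the support of $v_i$ (the set of indices of entries equal to $1$), and let $n_i = \frac{(k-2)k^i + 1}{k-1}$. Then there are no integers $r \ge 0$, $s > 0$ with $r + s(k-1) < n_i$ such that $\{r, r+s, r+2s, \dots, r+(k-1)s\} \cap S = \emptyset$. *)

(* Defs.v *)
From mathcomp Require Import all_boot.
Set Implicit Arguments. Unset Strict Implicit. Unset Printing Implicit Defensive.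

(* vrec k j = v_{j+1} (the paper's v_i with i = j+1), as a 0/1 vector (true = 1).
   v_1 = all-zero of length k-1;
   v_{j+2} = (k-1) copies of the block (v_{j+1}, 1,...,1) with k^j ones. *)
Fixpoint vrec (k j : nat) : seq bool :=
  match j with
  | 0 => nseq k.-1 false
  | j'.+1 => flatten (nseq k.-1 (vrec k j' ++ nseq (k ^ j') true))
  end.

Definition vvec (k i : nat) : seq bool := vrec k i.-1.

Definition mlen (k i : nat) : nat := k ^ i.-1 * k.-1.

Definition support01 (v : seq bool) : pred nat := fun j => (j < size v) && nth false v j.

(* n_i = ((k-2) k^i + 1) / (k-1)  (exact division) *)
Definition nbound (k i : nat) : nat := ((k - 2) * k ^ i + 1) %/ (k - 1).

(* Main.v *)
Require Import Defs.
From mathcomp Require Import all_boot.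
From mathcomp Require Import zify.

Lemma nth_flat_nseq (B : seq bool) n x :
  nth false (flatten (nseq n B)) x = if x < n * size B then nth false B (x %% size B) else false.
Proof.
elim: n x => [|n IH] x /=; first by rewrite nth_nil.
rewrite nth_cat; case: ltnP => hx.
  by rewrite modn_small // (leq_trans hx) // leq_addr.
rewrite IH mulSn; have -> : (x < size B + n * size B) = (x - size B < n * size B) by lia.
case: ifP => // _.
by rewrite -(modnDr (x - size B)) subnK.
Qed.

Lemma size_vrec k j : 1 < k -> size (vrec k j) = k ^ j * k.-1.
Proof.
move=> hk; elim: j => [|j IH] /=; first by rewrite size_nseq mul1n.
rewrite size_flatten /shape map_nseq /= size_cat IH size_nseq.
have -> : sumn (nseq k.-1 (k ^ j * k.-1 + k ^ j)) = k.-1 * (k ^ j * k.-1 + k ^ j).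
  by elim: (k.-1) (k ^ j * k.-1 + k ^ j) => //= n IHn c; rewrite IHn mulSn.
rewrite expnS; have -> : k ^ j * k.-1 + k ^ j = k ^ j * k by set K := k ^ j; nia.
by set K := k ^ j; nia.
Qed.

Lemma nth_vrec k j x t : 1 < k -> x < k ^ j * k.-1 -> t <= j ->
  (x %/ k ^ t) %% k = k.-1 -> nth false (vrec k j) x.
Proof.
move=> hk; elim: j x t => [|j IH] x t hx ht hd.
  move: ht; rewrite leqn0 => /eqP ht; subst t.
  move: hd hx; rewrite expn0 divn1 mul1n => hd hx.
  by move: hd; rewrite modn_small; [lia|lia].
rewrite /= nth_flat_nseq size_cat size_vrec // size_nseq.
have hB : k ^ j * k.-1 + k ^ j = k ^ j.+1.
  by rewrite expnS; set K := k ^ j; nia.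
rewrite hB.
have hx' : x < k.-1 * k ^ j.+1 by rewrite mulnC.
rewrite hx' nth_cat size_vrec //.
set y := x %% k ^ j.+1.
have hyk : y < k ^ j.+1 by rewrite ltn_mod expn_gt0; lia.
case: ltnP => hy; last first.
  by rewrite nth_nseq; case: ifP => // /negbT; rewrite -leqNgt; lia.
case: (ltnP t j.+1) => htj; last first.
  have htj' : t = j.+1 by lia.
  subst t; move: hd; rewrite modn_small.
    have := hx; rewrite -ltn_divLR ?expn_gt0; lia.
  rewrite ltn_divLR ?expn_gt0; last lia.
  set K := k ^ j.+1; nia.
apply: (IH y t) => //.
rewrite /y divn_modl; last by rewrite dvdn_exp2l.
rewrite -expnB; [|lia|lia].
rewrite modn_dvdm // -[j.+1 - t]prednK; last lia.
by rewrite expnS dvdn_mulr.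
Qed.

Theorem lemma3 (k i : nat) (hk : prime k) (hi : 1 <= i) :
  ~ (exists r s : nat,
        [/\ 0 < s, r + s * (k - 1) < nbound k i &
            forall j : nat, j < k -> ~~ support01 (vvec k i) (r + j * s)]).
Proof.
move=> [r [s [hs hlt hall]]].
have k1 : 1 < k by apply: prime_gt1.
have hnb : nbound k i <= k ^ i.-1 * k.-1.
  rewrite /nbound -ltnS ltn_divLR; last lia.
  have -> : k ^ i = k ^ i.-1 * k by rewrite -expnSr prednK.
  set K := k ^ i.-1.
  have : 0 < K by rewrite expn_gt0; lia.
  have [p hp] : exists p, k = p.+2 by exists (k-2); lia.
  rewrite hp; move: K => K hK.
  have -> : p.+2 - 2 = p by lia.
  have -> : p.+2 - 1 = p.+1 by lia.
  rewrite /= !mulnS !mulSn; nia.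
set t := logn k s.
have dts : k ^ t %| s by apply: pfactor_dvdnn.
set s' := s %/ k ^ t.
have hss : s = s' * k ^ t by rewrite divnK.
have nd : ~~ (k %| s').
  apply/negP => /dvdnP [q hq].
  have : k ^ t.+1 %| s by rewrite hss hq expnS dvdn_mul // dvdn_mull.
  by rewrite pfactor_dvdn // ltnn.
have kt0 : 0 < k ^ t by rewrite expn_gt0; lia.
have hti : t < i.
  rewrite ltnNge; apply/negP => hit.
  have : k ^ i <= s.
    apply: (leq_trans (leq_pexp2l _ hit)); first lia.
    by apply: dvdn_leq.
  have : k ^ i.-1 * k.-1 < k ^ i.
    have -> : k ^ i = k ^ i.-1 * k by rewrite -expnSr prednK.
    rewrite ltn_mul2l expn_gt0; lia.
  nia.
set a := r %/ k ^ t.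
pose f (j : 'I_k) : 'I_k := Ordinal (@ltn_pmod (a + j * s') k (ltnW k1)).
have finj : injective f.
  move=> j1 j2 /(congr1 val) /= /eqP h; apply/val_inj => /=.
  wlog le12 : j1 j2 h / (j1 <= j2).
    move=> W; case: (leqP j1 j2) => hh; first exact: W.
    by apply/esym/W; [rewrite eq_sym|apply: ltnW].
  move: h; rewrite eq_sym eqn_modDl eqn_mod_dvd ?leq_mul2r ?le12 ?orbT //.
  rewrite -mulnBl Euclid_dvdM // (negbTE nd) orbF => hd.
  case: (posnP (j2 - j1)) => [h0|hp]; first lia.
  have := dvdn_leq hp hd; have := ltn_ord j2; lia.
have [g fg gf] := injF_bij finj.
have km : k.-1 < k by lia.
set j := g (Ordinal km).
have hj : (a + j * s') %% k = k.-1 by have := gf (Ordinal km); move/(congr1 val).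
have := hall j (ltn_ord j); apply/negP/negPn.
have hxs : r + j * s < nbound k i.
  apply: leq_ltn_trans hlt; rewrite leq_add2l mulnC leq_mul2l; have := ltn_ord j; lia.
have hxm : r + j * s < k ^ i.-1 * k.-1 by lia.
rewrite /support01 /vvec size_vrec // hxm /=.
apply: (@nth_vrec k i.-1 _ t) => //; first lia.
rewrite hss mulnA addnC divnMDl // addnC; exact hj.
Qed.
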